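(* Let $\|\cdot\|$ be a norm on $\mathbb{R}^d$, $\epsilon>0$, and $A\subseteq\mathbb{R}^d$. Then $$A=(A^{-\epsilon})^\epsilon\sqcup F(A),\qquad (A^\epsilon)^{-\epsilon}=A\sqcup F(A^C),$$ where $\sqcup$ denotes disjoint union.
   Context: $\overline{B_\epsilon(\mathbf a)}=\{\mathbf z:\|\mathbf z-\mathbf a\|\le\epsilon\}$; $A^\epsilon=\bigcup_{\mathbf a\in A}\overline{B_\epsilon(\mathbf a)}$ ($=A\oplus\overline{B_\epsilon(\mathbf 0)}$) and $A^{-\epsilon}=((A^C)^\epsilon)^C$. For a set $S$, $F(S)=\{\mathbf x\in S:\text{every closed }\epsilon\text{-ball }\overline{B_\epsilon(\mathbf y)}\text{ containing }\mathbf x\text{ also intersects }S^C\}$. *)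

(* Defs.v *)
From HB Require Import structures.
From mathcomp Require Import all_boot all_order all_algebra.
From mathcomp Require Import boolp classical_sets reals.
Set Implicit Arguments. Unset Strict Implicit. Unset Printing Implicit Defensive.
Import Order.TTheory GRing.Theory Num.Theory.
Local Open Scope ring_scope.
Local Open Scope classical_set_scope.

Definition is_norm (R : realType) (d : nat) (N : 'rV[R]_d -> R) : Prop :=
  [/\ forall x, 0 <= N x,
      forall x, N x = 0 -> x = 0,
      forall (a : R) x, N (a *: x) = `|a| * N x &
      forall x y, N (x + y) <= N x + N y].

Definition cball (R : realType) (d : nat) (N : 'rV[R]_d -> R)
  (a : 'rV[R]_d) (e : R) : set 'rV[R]_d := [set z | N (z - a) <= e].

Definition thicken (R : realType) (d : nat) (N : 'rV[R]_d -> R)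
  (e : R) (A : set 'rV[R]_d) : set 'rV[R]_d :=
  \bigcup_(a in A) cball N a e.

Definition erode (R : realType) (d : nat) (N : 'rV[R]_d -> R)
  (e : R) (A : set 'rV[R]_d) : set 'rV[R]_d :=
  ~` thicken N e (~` A).

Definition Fset (R : realType) (d : nat) (N : 'rV[R]_d -> R)
  (e : R) (S : set 'rV[R]_d) : set 'rV[R]_d :=
  [set x | S x /\ forall y, cball N y e x -> cball N y e `&` ~` S !=set0].

(* Main.v *)
Require Import Defs.
From HB Require Import structures.
From mathcomp Require Import all_boot all_order all_algebra.
From mathcomp Require Import boolp classical_sets reals.
Import Order.TTheory GRing.Theory Num.Theory.
Local Open Scope ring_scope.
Local Open Scope classical_set_scope.

Lemma Nsym (R : realType) (d : nat) (N : 'rV[R]_d -> R) :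
  is_norm N -> forall x y, N (x - y) = N (y - x).
Proof.
case=> _ _ hs _ x y.
have -> : y - x = (-1) *: (x - y) by rewrite scaleN1r opprB.
by rewrite hs normrN normr1 mul1r.
Qed.

Theorem lemma20 (R : realType) (d : nat) (N : 'rV[R]_d -> R)
  (e : R) (A : set 'rV[R]_d) :
  is_norm N -> 0 < e ->
  (A = thicken N e (erode N e A) `|` Fset N e A /\
   thicken N e (erode N e A) `&` Fset N e A = set0) /\
  (erode N e (thicken N e A) = A `|` Fset N e (~` A) /\
   A `&` Fset N e (~` A) = set0).
Proof.
move=> hN _; have S := @Nsym _ _ N hN.
have Hsub : forall z, thicken N e (erode N e A) z -> A z.
  move=> z [y Ey Hzy]; apply: contrapT => nAz; apply: Ey.
  by exists z => //; rewrite /cball /= S.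
split; split.
- apply/seteqP; split => z /=.
    move=> Az; have [Tz|nTz] := pselect (thicken N e (erode N e A) z); first by left.
    right; split => // y Hy; apply: contrapT => H; apply: nTz.
    exists y => //; rewrite /erode /thicken /= => -[w nAw Hw].
    apply: H; exists w; split => //; by rewrite /cball /= S.
  by case => [/Hsub|[]].
- apply/seteqP; split => z //= [[y Ey Hzy] [_ HF]].
  have [w [Hw nAw]] := HF y Hzy.
  apply: Ey; exists w => //; by rewrite /cball /= S.
- apply/seteqP; split => z /=.
    rewrite /erode /thicken /= => H.
    have [Az|nAz] := pselect (A z); first by left.
    right; split => // y Hy; apply: contrapT => H2; apply: H.
    exists y; last by [].
    move=> [b Ab Hb]; apply: H2; exists b; split => //; by rewrite /cball /= S.
  rewrite /erode /thicken /= => Hz [a Ha Hza].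
  apply: Ha; case: Hz => [Az|[nAz HF]].
    by exists z => //; rewrite /cball /= S.
  have [w [Hw Aw]] := HF a Hza.
  exists w; [exact: contrapT | by move: Hw; rewrite /cball /= S].
- by apply/seteqP; split => z //= [Az [nAz _]].
Qed.
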